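(* Let $G$ and $H$ be finite groups, $U\leq G\times H$ a subdirect product, and $A$ an abelian group satisfying the Hypothesis for a set of primes $\pi$ which contains every prime divisor of $|G|$ and $|H|$. Then the natural restriction map $\rho:\mathrm{Hom}(G\times H,A)\to\mathrm{Hom}(U,A)$ is surjective if and only if $G'\cap k_1(U)=k_1(U')$, or equivalently if and only if $H'\cap k_2(U)=k_2(U')$.
   Context: For $U\leq G\times H$: $p_1(U)=\{g:\exists h,(g,h)\in U\}$, $p_2(U)=\{h:\exists g,(g,h)\in U\}$, $k_1(U)=\{g:(g,1)\in U\}$, $k_2(U)=\{h:(1,h)\in U\}$; $U$ is a subdirect product if $p_1(U)=G$, $p_2(U)=H$. $X'$ denotes the commutator subgroup of a group $X$. An abelian group $A$ satisfies the Hypothesis (with set of primes $\pi$) if there is a unique set of primes $\pi$ such that for every $n\in\mathbb{N}$ the $n$-torsion part of $A$ is cyclic of order $n_\pi$ (the $\pi$-part of $n$). *)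

(* Defs.v *)
From HB Require Import structures.
From mathcomp Require Import all_boot all_order all_algebra all_fingroup.
Set Implicit Arguments. Unset Strict Implicit. Unset Printing Implicit Defensive.
Import GRing.Theory.

Local Open Scope group_scope.

Definition p1 (gT1 gT2 : finGroupType) (U : {set gT1 * gT2}) : {set gT1} :=
  [set x.1 | x in U].
Definition p2 (gT1 gT2 : finGroupType) (U : {set gT1 * gT2}) : {set gT2} :=
  [set x.2 | x in U].
Definition k1 (gT1 gT2 : finGroupType) (U : {set gT1 * gT2}) : {set gT1} :=
  [set g | (g, 1) \in U].
Definition k2 (gT1 gT2 : finGroupType) (U : {set gT1 * gT2}) : {set gT2} :=
  [set h | (1, h) \in U].

Definition subdirect (gT1 gT2 : finGroupType) (G : {set gT1}) (H : {set gT2})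
  (U : {set gT1 * gT2}) : Prop :=
  [/\ U \subset setX G H, p1 U = G & p2 U = H].

Definition is_hom (gT : finGroupType) (A : zmodType) (D : {set gT}) (f : gT -> A) : Prop :=
  {in D &, forall x y, f (x * y) = (f x + f y)%R}.

Definition torsion (A : zmodType) (n : nat) : A -> Prop := fun a => (a *+ n = 0)%R.

(* The Hypothesis (with set of primes pi): for every n >= 1 the n-torsion
   part of A is cyclic of order n_pi, i.e. it is generated by an element a
   whose order is exactly n`_pi. *)
Definition hypothesis (A : zmodType) (pi : nat_pred) : Prop :=
  forall n : nat, (0 < n)%N ->
    exists a : A,
      (forall b : A, torsion n b <-> exists k : nat, b = (a *+ k)%R) /\
      (forall m : nat, (a *+ m = 0)%R <-> (n`_pi %| m)%N).

(* Main.v *)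
Require Import Defs.
From HB Require Import structures.
From mathcomp Require Import all_boot all_order all_algebra all_fingroup all_solvable.
From mathcomp Require Import zify.
Set Implicit Arguments. Unset Strict Implicit. Unset Printing Implicit Defensive.
Import GRing.Theory.
Local Open Scope group_scope.


Lemma hom1 (T : finGroupType) (A : zmodType) (S : {group T}) f :
  is_hom (A:=A) S f -> f 1 = 0%R.
Proof.
move=> hf; have := hf 1 1 (group1 S) (group1 S); rewrite mulg1 => e.
by apply: (addrI (f 1)); rewrite addr0 -e.
Qed.

Lemma homV (T : finGroupType) (A : zmodType) (S : {group T}) f x :
  is_hom (A:=A) S f -> x \in S -> f x^-1 = (- f x)%R.
Proof.
move=> hf xS; have := hf x x^-1 xS (groupVr xS); rewrite mulgV (hom1 hf).
by move=> e; apply: (addrI (f x)); rewrite subrr -e.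
Qed.

Lemma homX (T : finGroupType) (A : zmodType) (S : {group T}) f x k :
  is_hom (A:=A) S f -> x \in S -> f (x ^+ k) = (f x *+ k)%R.
Proof.
move=> hf xS; elim: k => [|k IH]; first by rewrite expg0 mulr0n (hom1 hf).
by rewrite expgS hf ?groupX // IH mulrS.
Qed.

Lemma hom_der (T : finGroupType) (A : zmodType) (X : {group T}) f :
  is_hom (A:=A) X f -> {in [~: X, X], forall y, f y = 0%R}.
Proof.
move=> hf.
have gK : group_set [set y in X | f y == 0%R].
  apply/group_setP; split; first by rewrite inE group1 (hom1 hf) eqxx.
  move=> x y; rewrite !inE => /andP[xX /eqP fx] /andP[yX /eqP fy].
  by rewrite groupM // hf // fx fy addr0 eqxx.
have sub : [~: X, X] \subset Group gK.
  rewrite gen_subG; apply/subsetP => _ /imset2P[u v uX vX ->].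
  rewrite inE groupR //= commgEl conjgE !hf ?(homV hf); last 1 first.
  all: rewrite ?groupV ?groupM ?groupV //.
  by rewrite addrA -opprD addNr eqxx.
by move=> y /(subsetP sub); rewrite inE => /andP[_ /eqP].
Qed.

Lemma homM (T : finGroupType) (A : zmodType) (S : {group T}) f x y :
  is_hom (A:=A) S f -> x \in S -> y \in S -> f (x * y) = (f x + f y)%R.
Proof. by move=> hf; apply: hf. Qed.

Lemma order_mod (T : finGroupType) (S : {group T}) x : x \in 'N(S) ->
  exists m, (0 < m)%N /\ forall k, (x ^+ k \in S) = (m %| k)%N.
Proof.
move=> xN; exists #[coset S x]; split; first exact: order_gt0.
move=> k; rewrite order_dvdn -morphX //.
apply/idP/eqP; first by move/coset_id.
by apply: coset_idr; rewrite groupX.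
Qed.

Lemma uniq_mod (T : finGroupType) (S : {group T}) x m a b :
  (forall k, (x ^+ k \in S) = (m %| k)%N) -> (a < m)%N -> (b < m)%N ->
  x ^+ a * (x ^+ b)^-1 \in S -> a = b.
Proof.
move=> hm.
wlog le_ab : a b / (a <= b)%N.
  move=> W am bm abS; case: (leqP a b) => [/W|/ltnW ba]; first exact.
  by apply/esym/W => //; rewrite -groupV invMg invgK.
move=> am bm abS.
have : x ^+ (b - a) \in S.
  by rewrite -groupV invMg invgK -{1}(subnK le_ab) expgnDr mulgK in abS.
rewrite hm => /dvdn_leq; case: (ltngtP a b) => // ab.
  rewrite subn_gt0 ab => /(_ isT) => h.
  by have := leq_ltn_trans (leq_subr a b) bm; rewrite ltnNge h.
by move: le_ab; rewrite leqNgt ab.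
Qed.

Lemma step (T : finGroupType) (A : zmodType) (S : {group T}) x (f : T -> A) m c :
  x \in 'N(S) -> (0 < m)%N -> (forall k, (x ^+ k \in S) = (m %| k)%N) -> is_hom S f ->
  (forall s j, s \in S -> f (s ^ (x ^- j)) = f s) -> (c *+ m = f (x ^+ m)%g)%R ->
  exists f2 : T -> A, [/\ is_hom (S * <[x]>) f2, {in S, f2 =1 f} & f2 x = c].
Proof.
move=> xN m0 hm hf finv hc.
pose f2 t := if [pick i : 'I_m | t * (x ^+ i)^-1 \in S] is Some i
             then (f (t * (x ^+ i)^-1)%g + c *+ i)%R else 0%R.
have xjS : forall j, x ^+ j * (x ^+ (j %% m))^-1 \in S.
  move=> j; rewrite {1}(divn_eq j m) expgnDr mulgK hm.
  exact: dvdn_mull.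
have key : forall s j, s \in S -> f2 (s * x ^+ j) = (f s + c *+ j)%R.
  move=> s j sS; rewrite /f2; case: pickP => [i /= Hi | none]; last first.
    by have := none (Ordinal (ltn_pmod j m0)); rewrite /= -mulgA groupMl // xjS.
  rewrite -mulgA groupMl // in Hi.
  have ij : (i : nat) = j %% m.
    apply: (uniq_mod hm) => //; first exact: ltn_pmod.
    have := groupM (groupVr Hi) (xjS j).
    by rewrite invMg invgK -!mulgA mulKg.
  rewrite ij {1}(divn_eq j m) expgnDr mulgA mulgK.
  rewrite (homM hf) //; last first.
    by rewrite hm dvdn_mull.
  rewrite mulnC expgnA (homX _ hf); last by rewrite hm.
  by rewrite -hc -mulrnA -addrA -mulrnDr mulnC -divn_eq.
exists f2; split.
- move=> _ _ /mulsgP[s1 y1 s1S /cycleP[j1 ->] ->] /mulsgP[s2 y2 s2S /cycleP[j2 ->] ->].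
  have gN : (x ^+ j1)^-1 \in 'N(S) by rewrite groupV groupX.
  have e : s1 * x ^+ j1 * (s2 * x ^+ j2) = (s1 * s2 ^ (x ^+ j1)^-1) * x ^+ (j1 + j2).
    by rewrite conjgE invgK expgnDr !mulgA mulgKV.
  have s2J : s2 ^ (x ^+ j1)^-1 \in S by rewrite (memJ_norm _ gN).
  rewrite e (key _ _ (groupM s1S s2J)) (key _ _ s1S) (key _ _ s2S).
  have -> := hf _ _ s1S s2J.
  rewrite finv //.
  by rewrite mulrnDr addrACA.
- by move=> s sS; rewrite -[s]mulg1 -(expg0 x) key // mulr0n addr0 expg0 mulg1.
- by rewrite -[x]mul1g -[x]expg1 key // (hom1 hf) add0r.
Qed.

Lemma part_id (pi : nat_pred) N M : (forall p, prime p -> (p %| M)%N -> p \in pi) ->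
  (0 < M)%N -> (N %| M)%N -> (N`_pi)%N = N.
Proof.
move=> hp M0 NM; apply: part_pnat_id; apply: (pnat_dvd NM).
by apply/pnatP.
Qed.

Lemma hom_sub (T : finGroupType) (A : zmodType) (S X : {group T}) (f : T -> A) :
  X \subset S -> is_hom S f -> is_hom X f.
Proof. by move=> sXS hf x y xX yX; apply: hf; apply: (subsetP sXS). Qed.

Lemma ext_one (T : finGroupType) (A : zmodType) (pi : nat_pred) (X S : {group T}) (f : T -> A) :
  hypothesis A pi -> (forall p, prime p -> (p %| #|X|)%N -> p \in pi) ->
  [~: X, X] \subset S -> S \subset X -> is_hom S f -> {in [~: X, X], forall y, f y = 0%R} ->
  ~~ (X \subset S) ->
  exists (S2 : {group T}) (f2 : T -> A), [/\ S \proper S2, S2 \subset X,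
     [~: X, X] \subset S2, is_hom S2 f2 & {in S, f2 =1 f}].
Proof.
move=> hA hpi dS sSX hf f0 nsXS.
have [x xX xS] := subsetPn nsXS.
have nSX : S <| X := sub_der1_normal dS sSX.
have xN : x \in 'N(S) := subsetP (normal_norm nSX) x xX.
have [m [m0 hm]] := order_mod xN.
set N := #[x].
have hpiN : (N`_pi)%N = N.
  by apply: (part_id hpi); [exact: cardG_gt0 | exact: order_dvdG].
have hmN : (m %| N)%N by rewrite -hm expg_order group1.
have xmS : x ^+ m \in S by rewrite hm.
set b := f (x ^+ m).
have [a [ta oa]] := hA N (order_gt0 x).
have Nm0 : (0 < N %/ m)%N by rewrite divn_gt0 //; apply: dvdn_leq => //; exact: order_gt0.
have bN : (b *+ (N %/ m) = 0)%R.
  by rewrite /b -(homX _ hf xmS) -expgnA mulnC divnK // expg_order (hom1 hf).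
have tb : torsion N b by rewrite /torsion -(divnK hmN) mulrnA bN mul0rn.
have [k hk] := (ta b).1 tb.
have mk : (m %| k)%N.
  have := (oa (k * (N %/ m))%N).1; rewrite mulrnA -hk bN hpiN => /(_ erefl).
  by rewrite -{1}(divnK hmN) [(k * _)%N]mulnC dvdn_pmul2l.
set c := (a *+ (k %/ m))%R.
have hc : (c *+ m = f (x ^+ m)%g)%R by rewrite /c -mulrnA divnK // -hk.
have hinv : forall s j, s \in S -> f (s ^ (x ^- j)) = f s.
  move=> s j sS.
  have cD : [~ s, x ^- j] \in [~: X, X].
    by apply: mem_commg; [exact: (subsetP sSX) | rewrite groupV groupX].
  rewrite conjg_mulR.
  have -> := homM hf sS (subsetP dS _ cD).
  have -> := f0 _ cD.
  by rewrite addr0.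
have [f2 [hf2 ef2 f2x]] := step xN m0 hm hf hinv hc.
have e2 : S <*> <[x]> = S * <[x]> by apply: norm_joinEr; rewrite cycle_subG.
exists (S <*> <[x]>)%G, f2; split => //=.
- apply/properP; split; first exact: joing_subl.
  by exists x => //; apply: (subsetP (joing_subr S <[x]>)); exact: cycle_id.
- by rewrite join_subG sSX cycle_subG.
- exact: subset_trans dS (joing_subl _ _).
- by rewrite e2.
Qed.

Lemma loop (T : finGroupType) (A : zmodType) (pi : nat_pred) (X : {group T}) :
  hypothesis A pi -> (forall p, prime p -> (p %| #|X|)%N -> p \in pi) ->
  forall n (S : {group T}) (f : T -> A), (#|X| - #|S| <= n)%N ->
  [~: X, X] \subset S -> S \subset X -> is_hom S f -> {in [~: X, X], forall y, f y = 0%R} ->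
  exists F : T -> A, is_hom X F /\ {in S, F =1 f}.
Proof.
move=> hA hpi; elim=> [|n IH] S f hn dS sSX hf f0;
  case: (boolP (X \subset S)) => [sXS | nsXS];
  try by exists f; split => //; apply: hom_sub hf.
  have : S :==: X by rewrite eqEcard sSX -subn_eq0 -leqn0.
  by move/eqP => eSX; rewrite eSX subxx in nsXS.
have [S2 [f2 [pS2 sS2X dS2 hf2 ef2]]] := ext_one hA hpi dS sSX hf f0 nsXS.
have [|||||F [hF eF]] := IH S2 f2 => //.
- have := proper_card pS2; move: hn; lia.
- by move=> y yD; rewrite ef2 ?f0 //; exact: (subsetP dS).
exists F; split => // s sS; rewrite eF ?ef2 //.
by apply: (subsetP (proper_sub pS2)).
Qed.

Lemma ext (T : finGroupType) (A : zmodType) (pi : nat_pred) (X S : {group T}) (f : T -> A) :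
  hypothesis A pi -> (forall p, prime p -> (p %| #|X|)%N -> p \in pi) ->
  S \subset X -> is_hom S f -> {in S :&: [~: X, X], forall y, f y = 0%R} ->
  exists F : T -> A, is_hom X F /\ {in S, F =1 f}.
Proof.
move=> hA hpi sSX hf f0.
set D := [~: X, X].
have nDX : X \subset 'N(D) := normal_norm (der_normal 1 X).
have nD : S \subset 'N(D) := subset_trans sSX nDX.
have DX : D \subset X := der_sub 1 X.
have e1 : S <*> D = S * D := norm_joinEl nD.
pose f1 t := if [pick s in S | s^-1 * t \in D] is Some s then f s else 0%R.
have key1 : forall s y, s \in S -> y \in D -> f1 (s * y) = f s.
  move=> s y sS yD; rewrite /f1; case: pickP => [s' /andP[s'S Hs'] | none]; last first.
    by have := none s; rewrite sS mulKg yD.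
  rewrite mulgA groupMr // in Hs'.
  have hs : s'^-1 * s \in S :&: D by rewrite inE Hs' groupM ?groupV.
  have := f0 _ hs; rewrite (homM hf) ?groupV // (homV hf) // => /eqP.
  by rewrite addrC subr_eq0 => /eqP.
have hf1 : is_hom (S <*> D) f1.
  rewrite e1 => _ _ /mulsgP[s1 y1 s1S y1D ->] /mulsgP[s2 y2 s2S y2D ->].
  have yJ : y1 ^ s2 \in D by rewrite memJ_norm // (subsetP nD).
  have e : s1 * y1 * (s2 * y2) = (s1 * s2) * (y1 ^ s2 * y2).
    by rewrite conjgE !mulgA mulgK.
  rewrite e (key1 _ _ (groupM s1S s2S) (groupM yJ y2D)) (key1 _ _ s1S y1D) (key1 _ _ s2S y2D).
  exact: (homM hf).
have sDS1 : D \subset S <*> D := joing_subr _ _.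
have sSS1 : S \subset S <*> D := joing_subl _ _.
have sS1X : S <*> D \subset X by rewrite join_subG sSX DX.
have [F [hF eF]] := loop hA hpi (leqnn _) sDS1 sS1X hf1
  (fun y yD => etrans (esym (congr1 f1 (mul1g y))) (etrans (key1 _ _ (group1 S) yD) (hom1 hf))).
exists F; split => // s sS.
rewrite eF; last exact: (subsetP sSS1).
by have := key1 s 1 sS (group1 _); rewrite mulg1.
Qed.

Lemma commX (gT hT : finGroupType) (a c : gT) (b d : hT) :
  [~ (a, b), (c, d)] = ([~ a, c], [~ b, d]).
Proof. by []. Qed.

Lemma derX (gT hT : finGroupType) (G : {group gT}) (H : {group hT}) :
  [~: setX G H, setX G H] \subset setX [~: G, G] [~: H, H].
Proof.
rewrite (gen_subG _ (setX_group [~: G, G]%G [~: H, H]%G)).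
apply/subsetP => _ /imset2P[[a b] [c d] /setXP[aG bH] /setXP[cG dH] ->].
by rewrite commX /= inE /= !mem_commg.
Qed.

Lemma p2_group (gT hT : finGroupType) (K : {group gT * hT}) : group_set (p2 K).
Proof.
apply/group_setP; split; first by apply/imsetP; exists 1 => //; exact: group1.
move=> _ _ /imsetP[u uK ->] /imsetP[v vK ->].
by apply/imsetP; exists (u * v); rewrite ?groupM.
Qed.

Lemma p1_group (gT hT : finGroupType) (K : {group gT * hT}) : group_set (p1 K).
Proof.
apply/group_setP; split; first by apply/imsetP; exists 1 => //; exact: group1.
move=> _ _ /imsetP[u uK ->] /imsetP[v vK ->].
by apply/imsetP; exists (u * v); rewrite ?groupM.
Qed.

Lemma der_p2 (gT hT : finGroupType) (H : {group hT}) (U : {group gT * hT}) :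
  p2 U = H -> [~: H, H] \subset p2 [~: U, U].
Proof.
move=> pU; rewrite (gen_subG _ (Group (p2_group [~: U, U]%G))).
apply/subsetP => _ /imset2P[a b aH bH ->].
move: aH bH; rewrite -pU => /imsetP[u uU ->] /imsetP[v vU ->].
by apply/imsetP; exists [~ u, v]; [exact: mem_commg | case: u {uU} => ? ?; case: v {vU}].
Qed.

Lemma der_p1 (gT hT : finGroupType) (G : {group gT}) (U : {group gT * hT}) :
  p1 U = G -> [~: G, G] \subset p1 [~: U, U].
Proof.
move=> pU; rewrite (gen_subG _ (Group (p1_group [~: U, U]%G))).
apply/subsetP => _ /imset2P[a b aH bH ->].
move: aH bH; rewrite -pU => /imsetP[u uU ->] /imsetP[v vU ->].
by apply/imsetP; exists [~ u, v]; [exact: mem_commg | case: u {uU} => ? ?; case: v {vU}].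
Qed.

Lemma V_k1 (gT hT : finGroupType) (G : {group gT}) (H : {group hT}) (U : {group gT * hT}) :
  subdirect G H U ->
  (U :&: setX [~: G, G] [~: H, H] \subset [~: U, U]) <-> ([~: G, G] :&: k1 U = k1 [~: U, U]).
Proof.
case=> sU p1U p2U.
have dU : [~: U, U] \subset setX [~: G, G] [~: H, H].
  exact: subset_trans (commgSS sU sU) (derX G H).
have dUU : [~: U, U] \subset U := der_sub 1 U.
split=> [sV | ek].
  apply/setP => g; rewrite !inE; apply/idP/idP.
    case/andP => gG gU; apply: (subsetP sV); by rewrite !inE gU /= gG group1.
  move=> gU'; have := subsetP dU _ gU'; rewrite inE /= => /andP[-> _].
  exact: (subsetP dUU).
apply/subsetP => -[g h]; rewrite !inE /= => /andP[uU /andP[gG hH]].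
have := subsetP (der_p2 p2U) h hH => /imsetP[v vU' hv].
have vU := subsetP dUU v vU'.
have := subsetP dU v vU'; rewrite inE => /andP[v1G _].
have wU : (g, h) * v^-1 \in U by rewrite groupM ?groupV.
have ew : (g, h) * v^-1 = (g * v.1^-1, 1).
  case: v {vU' vU v1G wU} hv => a b /= ->.
  by change ((g * a^-1, b * b^-1) = (g * a^-1, 1)); rewrite mulgV.
have : g * v.1^-1 \in [~: G, G] :&: k1 U by rewrite !inE groupM ?groupV //= -ew.
rewrite ek inE -ew => wU'.
by have := groupM wU' vU'; rewrite mulgKV.
Qed.

Lemma V_k2 (gT hT : finGroupType) (G : {group gT}) (H : {group hT}) (U : {group gT * hT}) :
  subdirect G H U ->
  (U :&: setX [~: G, G] [~: H, H] \subset [~: U, U]) <-> ([~: H, H] :&: k2 U = k2 [~: U, U]).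
Proof.
case=> sU p1U p2U.
have dU : [~: U, U] \subset setX [~: G, G] [~: H, H].
  exact: subset_trans (commgSS sU sU) (derX G H).
have dUU : [~: U, U] \subset U := der_sub 1 U.
split=> [sV | ek].
  apply/setP => h; rewrite !inE; apply/idP/idP.
    case/andP => hH hU; apply: (subsetP sV); by rewrite !inE hU /= hH group1.
  move=> hU'; have := subsetP dU _ hU'; rewrite inE /= => /andP[_ ->].
  exact: (subsetP dUU).
apply/subsetP => -[g h]; rewrite !inE /= => /andP[uU /andP[gG hH]].
have := subsetP (der_p1 p1U) g gG => /imsetP[v vU' gv].
have vU := subsetP dUU v vU'.
have := subsetP dU v vU'; rewrite inE => /andP[_ v2H].
have wU : (g, h) * v^-1 \in U by rewrite groupM ?groupV.
have ew : (g, h) * v^-1 = (1, h * v.2^-1).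
  case: v {vU' vU v2H wU} gv => a b /= ->.
  by change ((a * a^-1, h * b^-1) = (1, h * b^-1)); rewrite mulgV.
have : h * v.2^-1 \in [~: H, H] :&: k2 U by rewrite !inE groupM ?groupV //= -ew.
rewrite ek inE -ew => wU'.
by have := groupM wU' vU'; rewrite mulgKV.
Qed.

Lemma hom_fst (gT hT : finGroupType) (A : zmodType) (G : {group gT}) (H : {group hT}) (F : gT * hT -> A) :
  is_hom (setX G H) F -> is_hom G (fun g => F (g, 1)).
Proof.
move=> hF x y xG yG /=.
have -> : (x * y, 1) = (x, 1) * (y, 1 : hT) by rewrite -[RHS]/(x * y, 1 * 1) mulg1.
by apply: hF; rewrite inE /= ?group1 ?andbT.
Qed.

Lemma hom_snd (gT hT : finGroupType) (A : zmodType) (G : {group gT}) (H : {group hT}) (F : gT * hT -> A) :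
  is_hom (setX G H) F -> is_hom H (fun h => F (1, h)).
Proof.
move=> hF x y xG yG /=.
have -> : (1, x * y) = (1 : gT, x) * (1, y) by rewrite -[RHS]/(1 * 1, x * y) mulg1.
by apply: hF; rewrite inE /= ?group1.
Qed.

Lemma surj_V (gT hT : finGroupType) (G : {group gT}) (H : {group hT})
  (U : {group gT * hT}) (A : zmodType) (pi : nat_pred) :
  subdirect G H U ->
  hypothesis A pi ->
  (forall p : nat, prime p -> (p %| #|G|)%N -> p \in pi) ->
  (forall p : nat, prime p -> (p %| #|H|)%N -> p \in pi) ->
  (forall f : gT * hT -> A, is_hom U f ->
      exists F : gT * hT -> A, is_hom (setX G H) F /\ {in U, forall u, F u = f u}) <->
  (U :&: setX [~: G, G] [~: H, H] \subset [~: U, U]).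
Proof.
case=> sU p1U p2U hA hG hH.
have hGH : forall p, prime p -> (p %| #|setX_group G H|)%N -> p \in pi.
  by move=> p pp; rewrite /= cardsX Euclid_dvdM // => /orP[/(hG _ pp) | /(hH _ pp)].
have hU : forall p, prime p -> (p %| #|U|)%N -> p \in pi.
  move=> p pp pU; apply: hGH => //; apply: dvdn_trans pU _.
  by apply: cardSg; exact: sU.
split=> [surj | sV].
  apply/subsetP => u; rewrite inE => /andP[uU uV]; apply/negPn/negP => nu.
  have uN : u \in 'N([~: U, U]) := subsetP (normal_norm (der_normal 1 U)) u uU.
  have [m [m0 hm]] := order_mod uN.
  have mpi : (m`_pi)%N = m.
    apply: (part_id hU) => //; apply: dvdn_trans (order_dvdG uU).
    by rewrite -hm expg_order group1.
  have [a [ta oa]] := hA m m0.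
  have am : (a *+ m = 0)%R by apply/(oa m).2; rewrite mpi.
  have hz : is_hom [~: U, U] (fun _ : gT * hT => 0 : A)%R by move=> ? ? ? ?; rewrite addr0.
  have [f2 [hf2 ef2 f2u]] := @step _ A _ u (fun _ => 0%R) m a uN m0 hm hz (fun _ _ _ => erefl) am.
  have e2 : [~: U, U] <*> <[u]> = [~: U, U] * <[u]> by apply: norm_joinEr; rewrite cycle_subG.
  have sS2 : [~: U, U] <*> <[u]> \subset U by rewrite join_subG (der_sub 1 U) cycle_subG.
  have k0 : {in ([~: U,U] <*> <[u]>)%G :&: [~: U, U], forall y, f2 y = 0%R}.
    by move=> y; rewrite inE => /andP[_ yU']; rewrite ef2.
  have hf2' : is_hom ([~: U,U] <*> <[u]>)%G f2 by rewrite /= e2.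
  have [f' [hf' ef']] := ext hA hU sS2 hf2' k0.
  have uS2 : u \in [~: U, U] <*> <[u]> by apply: (subsetP (joing_subr _ _)); exact: cycle_id.
  have [F [hF eF]] := surj f' hf'.
  have Fu : F u = a by rewrite eF // ef' // f2u.
  have F0 : F u = 0%R.
    move: uV; rewrite inE => /andP[gG' hH'].
    set g := u.1 in gG' *; set h := u.2 in hH' *.
    have gG : g \in G := subsetP (der_sub 1 G) g gG'.
    have hhH : h \in H := subsetP (der_sub 1 H) h hH'.
    have -> : u = (g, 1) * (1, h).
      by rewrite -[RHS]/(g * 1, 1 * h) mulg1 mul1g /g /h; case: (u).
    rewrite (homM hF) ?inE /= ?group1 ?gG ?hhH //.
    have -> := hom_der (hom_fst hF) gG'.
    have -> := hom_der (hom_snd hF) hH'.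
    by rewrite addr0.
  have := (oa 1%N).1; rewrite mulr1n -Fu F0 mpi => /(_ erefl); rewrite dvdn1 => /eqP m1.
  by move: (hm 1%N); rewrite m1 dvdnn expg1 => uU'; rewrite uU' in nu.
move=> f hf.
have k0 : {in U :&: [~: setX_group G H, setX_group G H], forall y, f y = 0%R}.
  move=> y; rewrite inE => /andP[yU yD].
  apply: (hom_der hf); apply: (subsetP sV); rewrite inE yU.
  exact: (subsetP (derX G H)).
exact: (ext hA hGH sU hf k0).
Qed.

Theorem theorem3p2 (gT hT : finGroupType) (G : {group gT}) (H : {group hT})
  (U : {group gT * hT}) (A : zmodType) (pi : nat_pred) :
  subdirect G H U ->
  hypothesis A pi ->
  (forall p : nat, prime p -> (p %| #|G|)%N -> p \in pi) ->
  (forall p : nat, prime p -> (p %| #|H|)%N -> p \in pi) ->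
  let surj := forall f : gT * hT -> A, is_hom U f ->
      exists F : gT * hT -> A, is_hom (setX G H) F /\ {in U, forall u, F u = f u} in
  (surj <-> [~: G, G] :&: k1 U = k1 [~: U, U]) /\
  (surj <-> [~: H, H] :&: k2 U = k2 [~: U, U]).
Proof.
move=> sd hA hG hH surj.
have e := surj_V sd hA hG hH.
split; [apply: iff_trans e (V_k1 sd) | apply: iff_trans e (V_k2 sd)].
Qed.
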